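(* Suppose Assumptions 1 and 2 hold, let $J_0\in B(\mathbb{S}_+^n(\gamma))$ be a constant function, and let $J_k=T^kJ_0$, $\bar J_k=\bar T^kJ_0$, $\hat J_k=\hat T^kJ_0$. Then for every $k=0,1,2,\dots$ and every $P\in\mathbb{S}_+^n(\gamma)$, $J_k(P)\le\bar J_k(P)\le\hat J_k(P)$.
   Context: Fix positive integers $n,m$. Let $A\in\mathbb{R}^{n\times n}$ be Schur stable (every eigenvalue has modulus $<1$), $W\in\mathbb{R}^{n\times n}$ symmetric positive definite, $C\in\mathbb{R}^{m\times n}$ (the $i$-th row corresponds to sensor $i$), and $V\in\mathbb{R}^{m\times m}$ symmetric positive definite. For $S\subseteq\{1,\dots,m\}$, $C_S$ is the submatrix of $C$ formed by the rows indexed by $S$ and $V_S$ the principal submatrix of $V$ with rows and columns indexed by $S$ (with $C_S^\top V_S^{-1}C_S:=0$ when $S=\emptyset$). For $P\succeq 0$ define $f(P,S)=\big((APA^\top+W)^{-1}+C_S^\top V_S^{-1}C_S\big)^{-1}$. Let $g:2^{\{1,\dots,m\}}\to[0,\infty)$ and $c(P,S)=\mathrm{Tr}(P)+g(S)$. Fix a discount factor $0\le\beta<1$ and $\gamma>0$. Let $\mathbb{S}_+^n$ be the $n\times n$ positive semidefinite matrices and $\mathbb{S}_+^n(\gamma)=\{P\in\mathbb{S}_+^n:\mathrm{Tr}(P)\le\gamma\}$. $B(\mathbb{S}_+^n(\gamma))$ is the set of functions $J:\mathbb{S}_+^n(\gamma)\to\mathbb{R}$ with $\|J\|_\infty:=\sup_{P\in\mathbb{S}_+^n(\gamma)}|J(P)|<\infty$.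 Convention: every $J\in B(\mathbb{S}_+^n(\gamma))$ is evaluated as $J(Q)=+\infty$ for $Q\succeq0$ with $\mathrm{Tr}(Q)>\gamma$; minima over $S$ range over all $S\subseteq\{1,\dots,m\}$. Fix a resolution $\epsilon>0$. Let $\mathbb{M}=\{\epsilon P: P\in\mathbb{Z}^{n\times n}\text{ symmetric},\,P\succeq0\}$ and $\mathbb{M}(\gamma)=\{\hat P\in\mathbb{M}:\mathrm{Tr}(\hat P)\le\gamma\}$. Define $\Theta(P)=\epsilon\,\mathrm{round}(P/\epsilon)+\epsilon nI$ (entrywise rounding to the nearest integer) and $\Omega(P)=P+2\epsilon nI$. Operators: $(TJ)(P)=\min_S\{c(P,S)+\beta J(f(P,S))\}$, $(\bar TJ)(P)=\min_S\{c(P,S)+\beta J(\Theta(f(P,S)))\}$, $(\hat TJ)(P)=\min_S\{c(P,S)+\beta J(\Omega(f(P,S)))\}$ for $P\in\mathbb{S}_+^n(\gamma)$. Assumption 1: there exists $\pi:\mathbb{S}_+^n(\gamma)\to2^{\{1,\dots,m\}}$ with $f(P,\pi(P))\in\mathbb{S}_+^n(\gamma)$ for all $P\in\mathbb{S}_+^n(\gamma)$. Assumption 2: for each $P\in\mathbb{S}_+^n(\gamma)$ there exists $S\subseteq\{1,\dots,m\}$ with $\Omega(f(P,S))\in\mathbb{M}(\gamma)$. *)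

(* Defs.v *)
From mathcomp Require Import all_boot all_order all_algebra.
From mathcomp Require Import boolp reals constructive_ereal.
From mathcomp Require Import complex.

Set Implicit Arguments.
Unset Strict Implicit.
Unset Printing Implicit Defensive.

Import Order.TTheory GRing.Theory Num.Theory.
Local Open Scope ring_scope.

Section Defs.
Variable R : realType.

Definition psd (n : nat) (P : 'M[R]_n) : Prop :=
  P^T = P /\ forall x : 'cV[R]_n, 0 <= (x^T *m P *m x) 0 0.

Definition pd (n : nat) (P : 'M[R]_n) : Prop :=
  P^T = P /\ forall x : 'cV[R]_n, x != 0 -> 0 < (x^T *m P *m x) 0 0.

Definition schur_stable (n : nat) (A : 'M[R]_n) : Prop :=
  forall z : R[i], eigenvalue (map_mx (fun x : R => (x%:C)%C) A) z -> `|z| < 1.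

Definition inSg (n : nat) (gamma : R) (P : 'M[R]_n) : Prop :=
  psd P /\ \tr P <= gamma.

(* C_S : rows of C indexed by S (in increasing order) *)
Definition subC (n m : nat) (C : 'M[R]_(m, n)) (S : {set 'I_m}) : 'M[R]_(#|S|, n) :=
  \matrix_(i < #|S|, j < n) C (enum_val i) j.

Definition subV (m : nat) (V : 'M[R]_m) (S : {set 'I_m}) : 'M[R]_(#|S|) :=
  \matrix_(i < #|S|, j < #|S|) V (enum_val i) (enum_val j).

(* f(P,S); for S = set0 the correction term is the 0 x 0 product, i.e. 0 *)
Definition fK (n m : nat) (A W : 'M[R]_n) (C : 'M[R]_(m, n)) (V : 'M[R]_m)
  (P : 'M[R]_n) (S : {set 'I_m}) : 'M[R]_n :=
  invmx (invmx (A *m P *m A^T + W)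
         + (subC C S)^T *m invmx (subV V S) *m subC C S).

Definition cost (n m : nat) (g : {set 'I_m} -> R) (P : 'M[R]_n) (S : {set 'I_m}) : R :=
  \tr P + g S.

Definition roundR (x : R) : R := (Num.floor (x + 1 / 2))%:~R.

Definition Theta (n : nat) (eps : R) (P : 'M[R]_n) : 'M[R]_n :=
  eps *: map_mx (fun x => roundR (x / eps)) P + (eps * n%:R)%:M.

Definition Omega (n : nat) (eps : R) (P : 'M[R]_n) : 'M[R]_n :=
  P + (2 * eps * n%:R)%:M.

Definition inMg (n : nat) (eps gamma : R) (Q : 'M[R]_n) : Prop :=
  (exists Z : 'M[int]_n, Z^T = Z /\ psd (map_mx (fun z : int => z%:~R : R) Z)
     /\ Q = eps *: map_mx (fun z : int => z%:~R : R) Z)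
  /\ \tr Q <= gamma.

(* Generic Bellman operator with post-processing phi (id, Theta or Omega):
   (B J)(P) = min_S { c(P,S) + beta J(phi(f(P,S))) },
   with the convention J(Q) = +oo when Q is not in S_+^n(gamma). *)
Definition bellman (n m : nat) (A W : 'M[R]_n) (C : 'M[R]_(m, n)) (V : 'M[R]_m)
  (g : {set 'I_m} -> R) (beta gamma : R) (phi : 'M[R]_n -> 'M[R]_n)
  (J : 'M[R]_n -> \bar R) (P : 'M[R]_n) : \bar R :=
  \big[Order.min/+oo%E]_(S : {set 'I_m})
    (if `[< inSg gamma (phi (fK A W C V P S)) >]
     then ((cost g P S)%:E + beta%:E * J (phi (fK A W C V P S)))%E
     else +oo%E).

End Defs.

(* Main.v *)
Require Import Defs.
From mathcomp Require Import all_boot all_order all_algebra.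
From mathcomp Require Import boolp reals constructive_ereal.
From mathcomp Require Import complex.
From mathcomp Require Import ring lra.
Set Implicit Arguments.
Unset Strict Implicit.
Unset Printing Implicit Defensive.
Import Order.TTheory GRing.Theory Num.Theory.
Local Open Scope ring_scope.

Definition bf (R : realType) n (M : 'M[R]_n) (u v : 'cV[R]_n) : R := (u^T *m M *m v) 0 0.

Lemma bf_sym (R : realType) n (M : 'M[R]_n) u v : bf M u v = bf M^T v u.
Proof.
have h (A : 'M[R]_1) : A 0 0 = A^T 0 0 by rewrite mxE.
by rewrite /bf h !trmx_mul trmxK mulmxA.
Qed.

Lemma bfDl (R : realType) n (M : 'M[R]_n) u1 u2 v : bf M (u1 + u2) v = bf M u1 v + bf M u2 v.
Proof. by rewrite /bf linearD /= !mulmxDl mxE. Qed.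
Lemma bfNl (R : realType) n (M : 'M[R]_n) u v : bf M (- u) v = - bf M u v.
Proof. by rewrite /bf linearN /= !mulNmx mxE. Qed.
Lemma bfDr (R : realType) n (M : 'M[R]_n) u v1 v2 : bf M u (v1 + v2) = bf M u v1 + bf M u v2.
Proof. by rewrite /bf mulmxDr mxE. Qed.
Lemma bfNr (R : realType) n (M : 'M[R]_n) u v : bf M u (- v) = - bf M u v.
Proof. by rewrite /bf mulmxN mxE. Qed.
Lemma bfDM (R : realType) n (M N : 'M[R]_n) u v : bf (M + N) u v = bf M u v + bf N u v.
Proof. by rewrite /bf mulmxDr mulmxDl mxE. Qed.
Lemma bfNM (R : realType) n (M : 'M[R]_n) u v : bf (- M) u v = - bf M u v.
Proof. by rewrite /bf mulmxN mulNmx mxE. Qed.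
Lemma bfZM (R : realType) n (a : R) (M : 'M[R]_n) u v : bf (a *: M) u v = a * bf M u v.
Proof. by rewrite /bf -scalemxAr -scalemxAl mxE. Qed.
Lemma bf_congr (R : realType) k n (B : 'M[R]_(k, n)) (M : 'M[R]_n) u v :
  bf (B *m M *m B^T) u v = bf M (B^T *m u) (B^T *m v).
Proof. by rewrite /bf trmx_mul trmxK !mulmxA. Qed.

Lemma psd_bf (R : realType) n (M : 'M[R]_n) :
  psd M <-> (M^T = M /\ forall x, 0 <= bf M x x).
Proof. by []. Qed.

Lemma psdD (R : realType) n (M N : 'M[R]_n) : psd M -> psd N -> psd (M + N).
Proof.
move=> [hM qM] [hN qN]; split; first by rewrite linearD /= hM hN.
by move=> x; have := bfDM M N x x; rewrite /bf => ->; apply: addr_ge0.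
Qed.

Lemma psdZ (R : realType) n (a : R) (M : 'M[R]_n) : 0 <= a -> psd M -> psd (a *: M).
Proof.
move=> ha [hM qM]; split; first by rewrite linearZ /= hM.
by move=> x; have := bfZM a M x x; rewrite /bf => ->; apply: mulr_ge0.
Qed.

Lemma psd_congr (R : realType) k n (B : 'M[R]_(k, n)) (M : 'M[R]_n) :
  psd M -> psd (B *m M *m B^T).
Proof.
move=> [hM qM]; split; first by rewrite !trmx_mul trmxK hM mulmxA.
by move=> x; have := bf_congr B M x x; rewrite /bf => ->.
Qed.

Lemma pd_psd (R : realType) n (M : 'M[R]_n) : pd M -> psd M.
Proof.
move=> [hM qM]; split => // x; case: (eqVneq x 0) => [->|/qM/ltW //].
by rewrite mulmx0 mxE.
Qed.

Lemma pdD (R : realType) n (M N : 'M[R]_n) : pd M -> psd N -> pd (M + N).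
Proof.
move=> [hM qM] [hN qN]; split; first by rewrite linearD /= hM hN.
by move=> x /qM h; have := bfDM M N x x; rewrite /bf => ->; apply: ltr_wpDr.
Qed.

Lemma pd_unit (R : realType) n (M : 'M[R]_n) : pd M -> M \in unitmx.
Proof.
move=> [hM qM]; rewrite unitmxE unitfE; apply/negP => /det0P [v v0 vM].
have : v^T != 0 by rewrite trmx_eq0.
by move/qM; rewrite trmxK vM mul0mx mxE ltxx.
Qed.

Lemma pd_inv (R : realType) n (M : 'M[R]_n) : pd M -> pd (invmx M).
Proof.
move=> hpd; have Mu := pd_unit hpd; case: hpd => hM qM; split.
  by rewrite trmx_inv hM.
move=> x x0.
have y0 : invmx M *m x != 0.
  apply: contra x0 => /eqP h; apply/eqP.
  by rewrite -[x]mul1mx -(mulmxV Mu) -mulmxA h mulmx0.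
have := qM _ y0; rewrite trmx_mul trmx_inv hM.
by rewrite -!mulmxA [M *m (_ *m x)]mulmxA (mulmxV Mu) mul1mx mulmxA.
Qed.

Lemma bf_inv (R : realType) n (M : 'M[R]_n) u x : M \in unitmx ->
  bf M u (invmx M *m x) = (u^T *m x) 0 0.
Proof. by move=> Mu; rewrite /bf -mulmxA (mulmxA M) (mulmxV Mu) mul1mx. Qed.

Lemma inv_anti (R : realType) n (P Q : 'M[R]_n) :
  pd P -> pd Q -> psd (Q - P) -> psd (invmx P - invmx Q).
Proof.
move=> pP pQ [_ hQP].
have Pu := pd_unit pP; have Qu := pd_unit pQ.
have [siP _] := pd_inv pP; have [siQ _] := pd_inv pQ.
have [sP _] := pP; have [sQ _] := pQ.
have [_ qP] := pd_psd pP.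
split; first by rewrite linearB /= siP siQ.
move=> x; set y := invmx Q *m x; set z := invmx P *m x.
have h1 := qP (y - z).
have e : bf P (y - z) (y - z) = bf P y y - bf P y z - bf P z y + bf P z z.
  by rewrite bfDl bfNl !bfDr !bfNr; ring.
have ePyz : bf P y z = bf (invmx Q) x x.
  by rewrite /z bf_inv // /y trmx_mul siQ.
have ePzy : bf P z y = bf P y z by rewrite bf_sym sP.
have ePzz : bf P z z = bf (invmx P) x x.
  by rewrite /z bf_inv // trmx_mul siP.
have eQ : bf Q y y = bf (invmx Q) x x.
  by rewrite {2}/y bf_inv // /y trmx_mul siQ.
have hle := hQP y.
have : bf (Q - P) y y = bf Q y y - bf P y y by rewrite bfDM bfNM.
rewrite /bf => eQP; rewrite eQP in hle.
have : bf (invmx P - invmx Q) x x = bf (invmx P) x x - bf (invmx Q) x x by rewrite bfDM bfNM.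
rewrite /bf => ->.
move: h1 hle; rewrite -/(bf P (y - z) (y - z)) -/(bf Q y y) -/(bf P y y) e ePzy ePyz ePzz eQ.
rewrite -!/(bf _ x x).
timeout 20 lra.
Qed.

Lemma bf_sum (R : realType) n (M : 'M[R]_n) x :
  bf M x x = \sum_i \sum_j x i 0 * M i j * x j 0.
Proof.
rewrite /bf mxE; under eq_bigr do rewrite mxE big_distrl.
rewrite exchange_big; apply: eq_bigr => i _; apply: eq_bigr => j _.
by rewrite mxE.
Qed.

Lemma bf_scalar (R : realType) n (a : R) x :
  bf (a%:M : 'M[R]_n) x x = a * \sum_i x i 0 ^+ 2.
Proof.
rewrite /bf mul_mx_scalar -scalemxAl mxE mxE; congr (_ * _).
by apply: eq_bigr => i _; rewrite mxE expr2.
Qed.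

Lemma foo (R : realType) (a b e : R) : -1 <= e -> e <= 1 -> - ((a ^+ 2 + b ^+ 2) / 2) <= a * e * b.
Proof.
move=> h1 h2.
  have := sqr_ge0 (a + b); have := sqr_ge0 (a - b).
  move=> s1 s2.
  have t1 : 0 <= (1 + e) * ((a + b) * (a + b)).
    by apply: mulr_ge0 => //; lra.
  have t2 : 0 <= (1 - e) * ((a - b) * (a - b)).
    by apply: mulr_ge0 => //; lra.
  have id : a * e * b + (a ^+ 2 + b ^+ 2) / 2 =
    ((1 + e) * ((a + b) * (a + b)) + (1 - e) * ((a - b) * (a - b))) / 4.
    by rewrite !expr2; field.
  lra.
Qed.

Lemma psd_nIE (R : realType) n (E : 'M[R]_n) :
  E^T = E -> (forall i j, `|E i j| <= 1) -> psd (n%:R%:M + E).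
Proof.
move=> sE bE; split; first by rewrite linearD /= tr_scalar_mx sE.
move=> x; rewrite -/(bf _ x x) bfDM bf_scalar.
set S := \sum_i x i 0 ^+ 2; rewrite bf_sum.
have key : - (\sum_i \sum_j ((x i 0 ^+ 2 + x j 0 ^+ 2) / 2)) <=
           \sum_i \sum_j x i 0 * E i j * x j 0.
  rewrite -sumrN; apply: ler_sum => i _; rewrite -sumrN; apply: ler_sum => j _.
  by have := bE i j; rewrite ler_norml => /andP [h1 h2]; apply: foo.
have ev : \sum_i \sum_j ((x i 0 ^+ 2 + x j 0 ^+ 2) / 2) = n%:R * S.
  have inner i : \sum_j ((x i 0 ^+ 2 + x j 0 ^+ 2) / 2) = (n%:R * x i 0 ^+ 2 + S) / 2.
    by rewrite -mulr_suml big_split /= sumr_const card_ord mulr_natl.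
  rewrite (eq_bigr _ (fun i _ => inner i)) -mulr_suml big_split /= -mulr_sumr.
  by rewrite sumr_const card_ord -/S -[S *+ n]mulr_natl; field.
rewrite ev in key.
have : 0 <= S by apply: sumr_ge0 => i _; apply: sqr_ge0.
move: key; clear; set T := \sum_i _.
lra.
Qed.

Lemma roundR_err (R : realType) (y : R) : `|roundR y - y| <= 1.
Proof.
rewrite /roundR; have := floor_itv (y + 1 / 2).
rewrite intrD /= => /andP [h1 h2].
rewrite ler_norml; apply/andP; split; lra.
Qed.

Definition Err (R : realType) n (eps : R) (f : 'M[R]_n) : 'M[R]_n :=
  map_mx (fun x => roundR (x / eps) - x / eps) f.

Lemma Err_sym (R : realType) n (eps : R) (f : 'M[R]_n) : f^T = f -> (Err eps f)^T = Err eps f.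
Proof.
move=> sf; apply/matrixP => i j; rewrite !mxE.
by have -> : f j i = f i j by rewrite -{1}sf mxE.
Qed.

Lemma Err_bnd (R : realType) n (eps : R) (f : 'M[R]_n) i j : `|Err eps f i j| <= 1.
Proof. by rewrite mxE roundR_err. Qed.

Lemma Theta_diff (R : realType) n (eps : R) (f : 'M[R]_n) : eps != 0 ->
  Theta eps f - f = eps *: (n%:R%:M + Err eps f).
Proof.
move=> e0; apply/matrixP => i j; rewrite !mxE.
case: (i == j) => /=; rewrite ?mulr1n ?mulr0n. all: by field.
Qed.

Lemma Omega_diff (R : realType) n (eps : R) (f : 'M[R]_n) : eps != 0 ->
  Omega eps f - Theta eps f = eps *: (n%:R%:M + - Err eps f).
Proof.
move=> e0; apply/matrixP => i j; rewrite !mxE.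
case: (i == j) => /=; rewrite ?mulr1n ?mulr0n; by field.
Qed.

Lemma Theta_ge (R : realType) n (eps : R) (f : 'M[R]_n) : 0 < eps -> f^T = f ->
  psd (Theta eps f - f).
Proof.
move=> e0 sf; rewrite Theta_diff ?gt_eqF //; apply: psdZ; first exact: ltW.
by apply: psd_nIE; [exact: Err_sym | exact: Err_bnd].
Qed.

Lemma Omega_ge (R : realType) n (eps : R) (f : 'M[R]_n) : 0 < eps -> f^T = f ->
  psd (Omega eps f - Theta eps f).
Proof.
move=> e0 sf; rewrite Omega_diff ?gt_eqF //; apply: psdZ; first exact: ltW.
apply: psd_nIE; first by rewrite linearN /= Err_sym.
by move=> i j; rewrite mxE normrN Err_bnd.
Qed.

Lemma Omega_diff2 (R : realType) n (eps : R) (f g : 'M[R]_n) :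
  Omega eps g - Omega eps f = g - f.
Proof. by rewrite /Omega opprD addrACA subrr addr0. Qed.

Lemma psd_tr (R : realType) n (M : 'M[R]_n) : psd M -> 0 <= \tr M.
Proof.
move=> [_ qM]; rewrite /mxtrace; apply: sumr_ge0 => i _.
have := qM (delta_mx i 0); rewrite trmx_delta -rowE -colE !mxE.
done.
Qed.

Lemma psd_tr_le (R : realType) n (P Q : 'M[R]_n) : psd (Q - P) -> \tr P <= \tr Q.
Proof. by move/psd_tr; rewrite linearB /= subr_ge0. Qed.

Definition selE (R : realType) m (S : {set 'I_m}) : 'M[R]_(m, #|S|) :=
  \matrix_(i, k) (i == enum_val k)%:R.

Lemma subV_E (R : realType) m (V : 'M[R]_m) S :
  subV V S = (selE R S)^T *m V *m (selE R S)^T^T.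
Proof.
rewrite trmxK; apply/matrixP => k l; rewrite !mxE.
rewrite (bigD1 (enum_val l)) //= big1 ?addr0; last first.
  by move=> j /negPf hj; rewrite !mxE hj mulr0.
rewrite !mxE eqxx mulr1 (bigD1 (enum_val k)) //= big1 ?addr0; last first.
  by move=> j /negPf hj; rewrite !mxE hj mul0r.
by rewrite !mxE eqxx mul1r.
Qed.

Lemma selE_inj (R : realType) m (S : {set 'I_m}) (x : 'cV[R]_#|S|) :
  x != 0 -> (selE R S)^T^T *m x != 0.
Proof.
rewrite trmxK; apply: contra => /eqP h; apply/eqP/matrixP => k o.
rewrite (ord1 o) mxE; have := congr1 (fun M : 'M[R]_(m,1) => M (enum_val k) 0) h.
rewrite !mxE (bigD1 k) //= big1 ?addr0; first by rewrite mxE eqxx mul1r.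
move=> j jk; rewrite mxE (inj_eq enum_val_inj).
by rewrite eq_sym (negPf jk) mul0r.
Qed.

Lemma pd_congr (R : realType) k n (B : 'M[R]_(k, n)) (M : 'M[R]_n) :
  pd M -> (forall x : 'cV[R]_k, x != 0 -> B^T *m x != 0) -> pd (B *m M *m B^T).
Proof.
move=> [hM qM] hB; split; first by rewrite !trmx_mul trmxK hM mulmxA.
by move=> x /hB /qM; have := bf_congr B M x x; rewrite /bf => ->.
Qed.

Lemma subV_pd (R : realType) m (V : 'M[R]_m) S : pd V -> pd (subV V S).
Proof. by move=> hV; rewrite subV_E; apply: pd_congr => // x; apply: selE_inj. Qed.

Lemma Kpsd (R : realType) n m (C : 'M[R]_(m, n)) (V : 'M[R]_m) S : pd V ->
  psd ((subC C S)^T *m invmx (subV V S) *m subC C S).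
Proof.
move=> hV; rewrite -{2}[subC C S]trmxK; apply: psd_congr.
exact/pd_psd/pd_inv/subV_pd.
Qed.

Lemma Mpd (R : realType) n (A W P : 'M[R]_n) : pd W -> psd P -> pd (A *m P *m A^T + W).
Proof. by move=> hW hP; rewrite addrC; apply: pdD => //; apply: psd_congr. Qed.

Lemma fK_pd (R : realType) n m (A W : 'M[R]_n) (C : 'M[R]_(m, n)) (V : 'M[R]_m) P S :
  pd W -> pd V -> psd P -> pd (fK A W C V P S).
Proof.
move=> hW hV hP; apply: pd_inv; apply: pdD; last exact: Kpsd.
exact/pd_inv/Mpd.
Qed.

Lemma fK_mono (R : realType) n m (A W : 'M[R]_n) (C : 'M[R]_(m, n)) (V : 'M[R]_m) P Q S :
  pd W -> pd V -> psd P -> psd Q -> psd (Q - P) ->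
  psd (fK A W C V Q S - fK A W C V P S).
Proof.
move=> hW hV hP hQ hQP; rewrite /fK.
have hK := Kpsd C S hV.
apply: inv_anti; try (apply: pdD => //; apply/pd_inv/Mpd => //).
rewrite opprD addrACA subrr addr0.
apply: inv_anti; try exact: Mpd.
by rewrite opprD addrACA subrr addr0 -mulmxBl -mulmxBr; apply: psd_congr.
Qed.

Lemma psd_trans (R : realType) n (X Y Z : 'M[R]_n) :
  psd (Y - X) -> psd (Z - Y) -> psd (Z - X).
Proof.
move=> h1 h2; have -> : Z - X = (Z - Y) + (Y - X) by rewrite addrA subrK.
exact: psdD.
Qed.

Lemma psd_of_le (R : realType) n (X Y : 'M[R]_n) : psd X -> psd (Y - X) -> psd Y.
Proof. by move=> h1 h2; rewrite -(subrK X Y); apply: psdD. Qed.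

Lemma inSg_le (R : realType) n (gamma : R) (X Y : 'M[R]_n) :
  psd X -> psd (Y - X) -> inSg gamma Y -> inSg gamma X.
Proof. by move=> hX hXY [_ hY]; split => //; apply: le_trans hY; apply: psd_tr_le. Qed.

Lemma psd_scalar (R : realType) n (a : R) : 0 <= a -> psd (a%:M : 'M[R]_n).
Proof.
move=> ha; split; first by rewrite tr_scalar_mx.
move=> x; rewrite -/(bf _ x x) bf_scalar; apply: mulr_ge0 => //.
by apply: sumr_ge0 => i _; apply: sqr_ge0.
Qed.

Lemma bigmin_le (R : realType) (I : finType) (a b : I -> \bar R) :
  (forall i, (a i <= b i)%E) ->
  (\big[Order.min/+oo%E]_i a i <= \big[Order.min/+oo%E]_i b i)%E.
Proof.
move=> h; apply: (big_ind2 (fun x y : \bar R => (x <= y)%E)) => //.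
by move=> x1 x2 y1 y2; apply: le_min2.
Qed.

Definition monoJ (R : realType) n (gamma : R) (J : 'M[R]_n -> \bar R) :=
  forall P Q, inSg gamma P -> inSg gamma Q -> psd (Q - P) -> (J P <= J Q)%E.

Lemma term_le (R : realType) n m (g : {set 'I_m} -> R) (beta gamma : R)
  (P1 P2 X1 X2 : 'M[R]_n) S (J1 J2 : 'M[R]_n -> \bar R) : 0 <= beta ->
  (inSg gamma X2 -> [/\ inSg gamma X1, \tr P1 <= \tr P2 & (J1 X1 <= J2 X2)%E]) ->
  ((if `[< inSg gamma X1 >] then ((cost g P1 S)%:E + beta%:E * J1 X1)%E else +oo%E)
   <= (if `[< inSg gamma X2 >] then ((cost g P2 S)%:E + beta%:E * J2 X2)%E else +oo%E))%E.
Proof.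
move=> hb h; case: (asboolP (inSg gamma X2)) => hX2; last exact: leey.
have [hX1 htr hJ] := h hX2; rewrite asboolT //.
apply: leeD; first by rewrite lee_fin /cost lerD2r.
by apply: lee_wpmul2l => //; rewrite lee_fin.
Qed.

Lemma bellman_mono (R : realType) n m (A W : 'M[R]_n) (C : 'M[R]_(m, n)) (V : 'M[R]_m)
  (g : {set 'I_m} -> R) (beta gamma : R) (phi : 'M[R]_n -> 'M[R]_n) J :
  pd W -> pd V -> 0 <= beta ->
  (forall X Y, psd X -> psd Y -> psd (Y - X) -> psd (phi Y - phi X)) ->
  (forall X, psd X -> psd (phi X)) ->
  monoJ gamma J -> monoJ gamma (bellman A W C V g beta gamma phi J).
Proof.
move=> hW hV hb Hphi Hpsd hJ P Q [hP _] [hQ _] hQP.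
apply: bigmin_le => S; apply: term_le => // hg; split.
- apply: (inSg_le (Hpsd _ (pd_psd (fK_pd A C S hW hV hP)))) hg.
  apply: Hphi; try exact: (pd_psd (fK_pd _ _ _ hW hV _)).
  exact: fK_mono.
- exact: psd_tr_le.
- apply: hJ => //.
  + apply: (inSg_le (Hpsd _ (pd_psd (fK_pd A C S hW hV hP)))) hg.
    apply: Hphi; try exact: (pd_psd (fK_pd _ _ _ hW hV _)).
    exact: fK_mono.
  + apply: Hphi; try exact: (pd_psd (fK_pd _ _ _ hW hV _)).
    exact: fK_mono.
Qed.

Lemma step1 (R : realType) n m (A W : 'M[R]_n) (C : 'M[R]_(m, n)) (V : 'M[R]_m)
  (g : {set 'I_m} -> R) (beta gamma eps : R) J J' :
  pd W -> pd V -> 0 <= beta -> 0 < eps -> monoJ gamma J ->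
  (forall X, inSg gamma X -> (J X <= J' X)%E) ->
  forall P, inSg gamma P ->
  (bellman A W C V g beta gamma id J P <= bellman A W C V g beta gamma (Theta eps) J' P)%E.
Proof.
move=> hW hV hb he hJ hJJ P [hP _]; apply: bigmin_le => S; apply: term_le => // hg.
have hf := pd_psd (fK_pd A C S hW hV hP).
have hT := Theta_ge he (proj1 hf).
have hfg : inSg gamma (fK A W C V P S) := inSg_le hf hT hg.
split => //; apply: le_trans (hJJ _ hg); apply: hJ => //.
Qed.

Lemma step2 (R : realType) n m (A W : 'M[R]_n) (C : 'M[R]_(m, n)) (V : 'M[R]_m)
  (g : {set 'I_m} -> R) (beta gamma eps : R) J J' :
  pd W -> pd V -> 0 <= beta -> 0 < eps -> monoJ gamma J' ->
  (forall X, inSg gamma X -> (J X <= J' X)%E) ->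
  forall P, inSg gamma P ->
  (bellman A W C V g beta gamma (Theta eps) J P <= bellman A W C V g beta gamma (Omega eps) J' P)%E.
Proof.
move=> hW hV hb he hJ hJJ P [hP _]; apply: bigmin_le => S; apply: term_le => // hg.
have hf := pd_psd (fK_pd A C S hW hV hP).
have hT := Theta_ge he (proj1 hf).
have hO := Omega_ge he (proj1 hf).
have hTp := psd_of_le hf hT.
have hTg := inSg_le hTp hO hg.
split => //; apply: le_trans (hJJ _ hTg) _; apply: hJ => //.
Qed.

Lemma Omega_psd (R : realType) n (eps : R) (X : 'M[R]_n) : 0 < eps -> psd X -> psd (Omega eps X).
Proof.
move=> he hX; apply: (psd_of_le hX); rewrite /Omega addrC addKr.
by apply: psd_scalar; apply: mulr_ge0 => //; apply: mulr_ge0 => //; lra.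
Qed.

Theorem proposition3 (R : realType) (n m : nat)
  (A W : 'M[R]_n) (C : 'M[R]_(m, n)) (V : 'M[R]_m)
  (g : {set 'I_m} -> R) (beta gamma eps c0 : R) :
  (0 < n)%N -> (0 < m)%N ->
  schur_stable A -> pd W -> pd V ->
  (forall S, 0 <= g S) ->
  0 <= beta -> beta < 1 -> 0 < gamma -> 0 < eps ->
  (* Assumption 1 *)
  (exists pi : 'M[R]_n -> {set 'I_m},
     forall P, inSg gamma P -> inSg gamma (fK A W C V P (pi P))) ->
  (* Assumption 2 *)
  (forall P, inSg gamma P ->
     exists S, inMg eps gamma (Omega eps (fK A W C V P S))) ->
  let J0 := fun _ : 'M[R]_n => (c0%:E : \bar R) in
  let T := bellman A W C V g beta gamma id in
  let Tbar := bellman A W C V g beta gamma (Theta eps) in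
  let That := bellman A W C V g beta gamma (Omega eps) in
  forall (k : nat) (P : 'M[R]_n), inSg gamma P ->
    (iter k T J0 P <= iter k Tbar J0 P)%E /\
    (iter k Tbar J0 P <= iter k That J0 P)%E.
Proof.
move=> _ _ _ hW hV _ hb _ _ he _ _ J0 T Tbar That k.
suff : [/\ monoJ gamma (iter k T J0), monoJ gamma (iter k That J0) &
  forall P, inSg gamma P ->
    (iter k T J0 P <= iter k Tbar J0 P)%E /\ (iter k Tbar J0 P <= iter k That J0 P)%E].
  by case.
elim: k => [|k [m1 m2 hle]] /=.
  by split => // P Q _ _ _ /=.
split.
- apply: (@bellman_mono R n m A W C V g beta gamma id) => //.
- apply: (@bellman_mono R n m A W C V g beta gamma (Omega eps)) => //.
    by move=> X Y _ _ h; rewrite Omega_diff2.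
  by move=> X; apply: Omega_psd.
- move=> P hP; split.
    apply: step1 => // X hX; exact: (proj1 (hle X hX)).
  apply: step2 => // X hX; exact: (proj2 (hle X hX)).
Qed.
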